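(* For integers $r\geq 3$ and $n\geq 2r+3$, the complex $\Delta_2^t(C_n^r)$ is simply connected, i.e. $\pi_1(\Delta_2^t(C_n^r))\cong 0$.
   Context: All graphs are finite and simple; $\alpha(G)$ is the independence number and $G[S]$ the induced subgraph on $S$. $\Delta_2^t(G)=\{\sigma\subseteq V(G):\ \alpha(G[V(G)\setminus\sigma])\geq 2\}$. $C_n$ is the cycle on $\{1,\dots,n\}$ with edges $\{i,i+1\}$ and $\{1,n\}$; $C_n^r$ is the graph on the same vertices where distinct vertices are adjacent iff their distance in $C_n$ is at most $r$. *)

(* Defs.v *)
From HB Require Import structures.
From mathcomp Require Import all_boot all_order all_algebra.
From mathcomp Require Import all_classical all_reals all_analysis.
Import numFieldNormedType.Exports.
Set Implicit Arguments. Unset Strict Implicit. Unset Printing Implicit Defensive.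
Import Order.TTheory GRing.Theory Num.Theory.

(* A simple graph on a finType T is given by an adjacency relation e
   (for the graphs below it is symmetric and irreflexive). *)

Definition independent (T : finType) (e : rel T) (A : {set T}) : bool :=
  [forall x in A, forall y in A, ~~ e x y].

Definition alpha_induced (T : finType) (e : rel T) (S : {set T}) : nat :=
  \max_(A : {set T} | (A \subset S) && independent e A) #|A|.

Definition Delta2t (T : finType) (e : rel T) : {set {set T}} :=
  [set sigma : {set T} | 2 <= alpha_induced e (~: sigma)].

(* Vertices 1..n of C_n are represented by 0..n-1 in 'I_n.
   Distance in C_n between i and j. *)
Definition cycle_dist (n : nat) (i j : 'I_n) : nat :=
  let d := if i <= j then j - i else i - j in minn d (n - d).

Definition Cnr (n r : nat) : rel 'I_n :=
  fun i j => (i != j) && (cycle_dist i j <= r).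

Local Open Scope ring_scope.
Local Open Scope classical_set_scope.

(* Geometric realization of a simplicial complex K on vertex set 'I_n,
   as a subspace of R^n (row vectors, product/matrix topology): points
   with nonnegative barycentric coordinates summing to 1 whose support
   is a face of K. *)
Definition realization (R : realType) (n : nat) (K : {set {set 'I_n}})
  : set 'rV[R]_n :=
  [set x | (forall i, 0 <= x ord0 i) /\ \sum_i x ord0 i = 1 /\
           finset (fun i => x ord0 i != 0) \in K].
Arguments realization R n K : clear implicits.

Definition unit_interval (R : realType) : set R := `[0%R, 1%R].
Arguments unit_interval R : clear implicits.

Definition simply_connected (R : realType) (V : topologicalType) (X : set V)
  : Prop :=
  X !=set0 /\
  (forall x y, X x -> X y ->
     exists g : R -> V, {within (unit_interval R), continuous g} /\
       (forall s, unit_interval R s -> X (g s)) /\ g 0 = x /\ g 1 = y) /\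
  (forall f : R -> V, {within (unit_interval R), continuous f} ->
     (forall s, unit_interval R s -> X (f s)) -> f 0 = f 1 ->
     exists H : R * R -> V,
       {within (unit_interval R `*` unit_interval R), continuous H} /\
       (forall p, (unit_interval R `*` unit_interval R) p -> X (H p)) /\
       (forall s, unit_interval R s -> H (s, 0) = f s /\ H (s, 1) = f 0) /\
       (forall t, unit_interval R t -> H (0, t) = f 0 /\ H (1, t) = f 0)).

(* Main.v *)
Require Import Defs.
From mathcomp Require Import all_boot all_order all_algebra.
From mathcomp Require Import all_classical all_reals all_analysis.
Import numFieldNormedType.Exports.

Module Helpers.
From mathcomp Require Import zify ring lra.
Set Implicit Arguments. Unset Strict Implicit. Unset Printing Implicit Defensive.
Import Order.TTheory GRing.Theory Num.Theory.

Lemma face_down (T : finType) (e : rel T) (s t : {set T}) :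
  s \subset t -> t \in Delta2t e -> s \in Delta2t e.
Proof.
move=> st; rewrite !inE => /leq_trans; apply.
rewrite /alpha_induced; apply/bigmax_leqP => A /andP[At iA].
apply: leq_bigmax_cond; rewrite iA andbT.
apply: (fintype.subset_trans At); by rewrite finset.setCS.
Qed.

Lemma pair_face (T : finType) (e : rel T) (s : {set T}) a b :
  a != b -> a \notin s -> b \notin s -> ~~ e a a -> ~~ e b b -> ~~ e a b -> ~~ e b a ->
  s \in Delta2t e.
Proof.
move=> ab as_ bs aa bb eab eba; rewrite inE /alpha_induced.
have -> : 2 = #|[set a; b]| by rewrite cards2 ab.
apply: leq_bigmax_cond; apply/andP; split.
  by apply/fintype.subsetP => x; rewrite !inE => /orP[]/eqP->; rewrite ?as_ ?bs.
apply/forallP => x; apply/implyP; rewrite !inE => /orP[]/eqP->;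
apply/forallP => y; apply/implyP; rewrite !inE => /orP[]/eqP->//.
Qed.

Lemma small_face (r n : nat) (s : {set 'I_n.+1}) :
  (3 <= r)%N -> (2 * r + 3 <= n.+1)%N -> (#|s| <= 3)%N -> s \in Delta2t (@Cnr n.+1 r).
Proof.
move=> r3 rn s3.
have irr : forall a : 'I_n.+1, ~~ Cnr r a a by move=> a; rewrite /Cnr eqxx.
have key : forall k, (k <= 3)%N -> ~~ Cnr r (inord k : 'I_n.+1) (inord (k + r.+1)) /\
                                 ~~ Cnr r (inord (k + r.+1) : 'I_n.+1) (inord k).
  move=> k k3.
  have hk1 : (k < n.+1)%N by lia.
  have hk2 : (k + r.+1 < n.+1)%N by lia.
  rewrite /Cnr /cycle_dist !inordK //.
  rewrite (_ : (k <= k + r.+1) = true); last lia.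
  rewrite (_ : (k + r.+1 <= k) = false); last lia.
  split; apply/negP => /andP[_]; lia.
case: (pickP (fun k : 'I_4 => (inord k \notin s) && (inord (k + r.+1) \notin s))).
  move=> k /andP[h1 h2].
  have [k1 k2] := key k (ltn_ord k).
  apply: (pair_face _ h1 h2) => //.
  have := ltn_ord k; move=> ?; apply/eqP => /(congr1 val) /=; rewrite !inordK; lia.
move=> H.
pose h (k : 'I_4) : 'I_n.+1 := if inord k \in s then inord k else inord (k + r.+1).
have hs : forall k, h k \in s.
  move=> k; have := H k; move/negbT; rewrite negb_and !negbK /h.
  by case: ifP => // _ /orP[]; rewrite // => ->.
have hinj : injective h.
  move=> k1 k2; rewrite /h; have := ltn_ord k1; have := ltn_ord k2.
  move=> l2 l1.
  case: ifP => _; case: ifP => _ /(congr1 val) /=; rewrite !inordK; try lia;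
  move=> E; apply/val_inj; rewrite /=; lia.
have : (#|h @: [set: 'I_4]| <= #|s|)%N.
  by apply: subset_leq_card; apply/fintype.subsetP => x /imsetP[k _ ->].
rewrite card_imset // cardsT card_ord; lia.
Qed.

Local Open Scope ring_scope.
Definition simp (R : realType) m (x : 'rV[R]_m) :=
  (forall i, 0 <= x ord0 i) /\ \sum_i x ord0 i = 1.

Lemma supp_eq (R : realType) m (x : 'rV[R]_m) :
  finset (fun i => x ord0 i != 0) = [set i | x ord0 i != 0].
Proof. by []. Qed.

Lemma conv_simp (R : realType) m k (c : nat -> R) (y : nat -> 'rV[R]_m) :
  (forall j, (j < k)%N -> 0 <= c j) -> \sum_(j < k) c j = 1 ->
  (forall j, simp (y j)) ->
  simp (\sum_(j < k) c j *: y j) /\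
  forall i, (\sum_(j < k) c j *: y j) ord0 i != 0 ->
     exists j, [/\ (j < k)%N, c j != 0 & y j ord0 i != 0].
Proof.
move=> c0 c1 ys.
have E : forall i, (\sum_(j < k) c j *: y j) ord0 i = \sum_(j < k) c j * y j ord0 i.
  by move=> i; rewrite summxE; apply: eq_bigr => j _; rewrite mxE.
split; first split.
- move=> i; rewrite E; apply: sumr_ge0 => j _; apply: mulr_ge0; first exact: c0.
  by case: (ys j).
- under eq_bigr do rewrite E.
  rewrite exchange_big /= -c1; apply: eq_bigr => j _.
  by rewrite -mulr_sumr; case: (ys j) => _ ->; rewrite mulr1.
move=> i; rewrite E => /eqP H.
case: (pickP (fun j : 'I_k => c j * y j ord0 i != 0)).
  move=> j; rewrite mulf_eq0 negb_or => /andP[h1 h2]; by exists j.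
move=> H2; exfalso; apply: H; apply: big1 => j _; apply/eqP.
by have := H2 j; move/negbT; rewrite negbK.
Qed.

Definition hat (R : realType) (x : R) : R := Num.max 0 (1 - `|x|).

Lemma hat_ge0 (R : realType) (x : R) : 0 <= hat x.
Proof. by rewrite /hat le_max lexx. Qed.

Lemma hat_eq0 (R : realType) (x : R) : 1 <= `|x| -> hat x = 0.
Proof. by move=> h; rewrite /hat max_l // subr_le0. Qed.

Lemma hat_pos (R : realType) (x : R) : `|x| <= 1 -> hat x = 1 - `|x|.
Proof. by move=> h; rewrite /hat max_r // subr_ge0. Qed.

Lemma hat_neq0 (R : realType) (x : R) : hat x != 0 -> `|x| < 1.
Proof. by apply: contraNT; rewrite -leNgt => /hat_eq0 ->. Qed.

Lemma hat_sum (R : realType) (M : nat) (u : R) : 0 <= u -> u <= M%:R ->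
  \sum_(i < M.+1) hat (u - i%:R) = 1.
Proof.
elim: M u => [|M IH] u u0 uM.
  have -> : u = 0 by apply/eqP; rewrite eq_le uM u0.
  by rewrite big_ord1 subr0 hat_pos ?normr0 ?subr0 // ler01.
rewrite big_ord_recr /=.
case: (lerP u M%:R) => uM'.
  rewrite IH // hat_eq0 ?addr0 //.
  rewrite ler0_norm; last by rewrite subr_le0 -natr1; lra.
  rewrite -natr1; lra.
have uM2 : u <= M%:R + 1 by move: uM; rewrite -natr1.
rewrite big_ord_recr /= big1 ?add0r.
  rewrite !hat_pos -?natr1.
  - rewrite ger0_norm ?subr_ge0; last by apply: ltW.
    rewrite ler0_norm; lra.
  - rewrite ler0_norm; lra.
  - rewrite ger0_norm; lra.
move=> i _; apply: hat_eq0.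
have : (i.+1 <= M)%N by apply: ltn_ord.
rewrite -(ler_nat R) -natr1 => iM.
rewrite ger0_norm; lra.
Qed.

Lemma hat_adj (R : realType) (u : R) (i j : nat) :
  hat (u - i%:R) != 0 -> hat (u - j%:R) != 0 -> (i <= j.+1)%N /\ (j <= i.+1)%N.
Proof.
move=> /hat_neq0 hi /hat_neq0 hj.
have H : `|i%:R - j%:R : R| < 2.
  have -> : i%:R - j%:R = (u - j%:R) - (u - i%:R) :> R by ring.
  apply: (le_lt_trans (ler_normB _ _)).
  by rewrite (_ : 2 = 1 + 1) //; apply: ltrD.
split.
- rewrite leqNgt; apply/negP => ij.
  have : (j.+2 <= i)%N by [].
  rewrite -(ler_nat R) -!natr1 => ij'.
  move: H; rewrite ger0_norm; lra.
- rewrite leqNgt; apply/negP => ij.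
  have : (i.+2 <= j)%N by [].
  rewrite -(ler_nat R) -!natr1 => ij'.
  move: H; rewrite ler0_norm; lra.
Qed.

Lemma hat_continuous (R : realType) : continuous (@hat R).
Proof.
have -> : @hat R = (fun _ => 0) \max (fun x : R => 1 - `|x|) by [].
apply: max_fun_continuous.
- exact: cst_continuous.
- move=> z; apply: continuousB; first exact: cst_continuous.
  exact: norm_continuous.
Qed.

Local Open Scope classical_set_scope.
Lemma seq_min_pos (R : realType) (T : eqType) (s : seq T) (F : T -> R) :
  (forall x, x \in s -> 0 < F x) -> exists2 d, 0 < d & forall x, x \in s -> d <= F x.
Proof.
elim: s => [|a s IH] H; first by exists 1 => //.
have [d d0 Hd] : exists2 d, 0 < d & forall x, x \in s -> d <= F x.
  by apply: IH => x xs; apply: H; rewrite inE xs orbT.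
have Fa : 0 < F a by apply: H; rewrite inE eqxx.
exists (Num.min d (F a)); first by rewrite lt_min d0 Fa.
move=> x; rewrite inE => /orP[/eqP->|xs]; first by rewrite ge_min lexx orbT.
by rewrite ge_min Hd.
Qed.

Lemma unif_cont (R : realType) (V : normedModType R) (f : R -> V) (a b : R) :
  {within `[a, b], continuous f} -> forall e, 0 < e -> exists2 d, 0 < d &
   forall s t, `[a, b] s -> `[a, b] t -> `|s - t| < d -> `|f s - f t| < e.
Proof.
move=> fc e e0.
set A := `[a, b] : set R.
have loc : forall x, A x -> exists2 d, 0 < d &
    forall y, A y -> `|x - y| < d -> `|f x - f y| < e / 2.
  move=> x Ax.
  have := (subspace_continuousP A f).1 fc x Ax.
  move/cvgr_dist_lt => /(_ (e / 2)); rewrite divr_gt0 // => /(_ isT).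
  rewrite nearE /within /= => /nbhs_ballP [d d0 Hd].
  exists d => // y Ay xy; apply: Hd => //.
pose D : set (R * R) := [set p | 0 < p.2 /\
   forall y, A y -> `|p.1 - y| < 2 * p.2 -> `|f p.1 - f y| < e / 2].
pose fam (p : R * R) : set R := ball p.1 p.2.
have : compact A by apply: segment_compact.
rewrite compact_cover => /(_ _ D fam) [].
- by move=> p _; apply: ball_open.
- move=> x Ax; have [d d0 Hd] := loc x Ax.
  exists (x, d / 2) => /=.
    split => /=; first by rewrite divr_gt0.
    move=> y Ay; rewrite mulrC -mulrA mulVf ?mulr1 //; first exact: Hd.
  by rewrite /fam /=; apply: ballxx; rewrite divr_gt0.
move=> D' D'D cov.
have [d d0 Hd] := @seq_min_pos R _ (finmap.enum_fset D') (fun p => p.2) (fun p pD => (set_mem (D'D p pD)).1).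
exists d => // s t As At st.
have [p pD' sp] := cov s As.
have [p2 Hp] := set_mem (D'D p pD').
have dp := Hd p pD'.
have ps : `|p.1 - s| < p.2 by move: sp; rewrite /fam -ball_normE.
have h1 : `|f p.1 - f s| < e / 2 by apply: Hp => //; lra.
have h2 : `|f p.1 - f t| < e / 2.
  apply: Hp => //.
  apply: (le_lt_trans (ler_distD s _ _)).
  lra.
have -> : f s - f t = (f p.1 - f t) - (f p.1 - f s) by rewrite opprB [RHS]addrC [RHS]addrA subrK.
apply: (le_lt_trans (ler_normB _ _)).
by rewrite (splitr e); apply: ltrD.
Qed.
Lemma within_fst (T U : topologicalType) (A : set T) (B : set U) (z : T * U) :
  (fst @ within (A `*` B) (nbhs z)) --> within A (nbhs z.1).
Proof.
case: z => x y /= S hS.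
have := (@cvg_fst _ _ (nbhs x) (nbhs y) _ _ hS).
rewrite /= /within => -[[P Q] /= [Px Qy] PQ].
exists (P, Q) => //= -[a b] /= [Pa Qb] [Aa Bb].
by apply: (PQ (a, b)).
Qed.
Lemma within_cont (T U : topologicalType) (A : set T) (h : T -> U) (z : T) :
  continuous h -> h @ within A (nbhs z) --> h z.
Proof. by move=> hc; apply: cvg_trans (hc z); apply: cvg_fmap2; apply: cvg_within. Qed.

Lemma coord_le (R : realType) m (x : 'rV[R]_m) j : `|x ord0 j| <= `|x|.
Proof.
have -> : `|x| = mx_norm x by [].
rewrite mx_normrE.
apply: (le_trans _ (le_bigmax _ _ (ord0, j))) => //.
Qed.

Lemma cvg_sumk (R : realType) (V : normedModType R) (T : Type) (F : set_system T)
  (FF : Filter F) k (G : nat -> T -> V) (a : nat -> V) :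
  (forall j, (j < k)%N -> G j @ F --> a j) ->
  (fun x => \sum_(j < k) G j x) @ F --> \sum_(j < k) a j.
Proof.
elim: k => [|k IH] H.
  rewrite big_ord0; under eq_fun do rewrite big_ord0; exact: cvg_cst.
rewrite big_ord_recr /=; under eq_fun do rewrite big_ord_recr /=.
apply: cvgD; last exact: H.
by apply: IH => j jk; apply: H; apply: ltnW.
Qed.

Lemma nat_dist1 (R : realType) (i j : nat) : i != j -> 1 <= `|j%:R - i%:R : R|.
Proof.
case: (ltngtP i j) => // h _.
  have : (i.+1 <= j)%N by [].
  rewrite -(ler_nat R) -natr1 => h'; rewrite ger0_norm; lra.
have : (j.+1 <= i)%N by [].
rewrite -(ler_nat R) -natr1 => h'; rewrite ler0_norm; lra.
Qed.

Lemma hat_sum_at (R : realType) (V : lmodType R) M (Q : nat -> V) j :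
  (j <= M)%N -> \sum_(i < M.+1) hat (j%:R - i%:R) *: Q i = Q j.
Proof.
move=> jM; have jM' : (j < M.+1)%N by [].
rewrite (bigD1 (Ordinal jM')) //= subrr hat_pos ?normr0 ?ler01 // subr0 scale1r.
rewrite big1 ?addr0 // => i /= ij.
rewrite hat_eq0 ?scale0r //; apply: nat_dist1.
apply/eqP => E; move: ij; rewrite -(inj_eq val_inj) /= E eqxx.
by [].
Qed.

Lemma hat_sum_scale (R : realType) (V : lmodType R) M (u : R) (p : V) :
  0 <= u -> u <= M%:R -> \sum_(i < M.+1) hat (u - i%:R) *: p = p.
Proof. by move=> u0 uM; rewrite -scaler_suml hat_sum // scale1r. Qed.

Lemma adj_pair (R : realType) (c : nat -> R) k : \sum_(j < k) c j = 1 ->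
  (forall i j, (i < k)%N -> (j < k)%N -> c i != 0 -> c j != 0 ->
      (i <= j.+1)%N /\ (j <= i.+1)%N) ->
  exists a, forall j, (j < k)%N -> c j != 0 -> j = a \/ j = a.+1.
Proof.
move=> c1 adj.
have [j0 [j0k cj0]] : exists j0, (j0 < k)%N /\ c j0 != 0.
  case: (pickP (fun j : 'I_k => c j != 0)) => [j cj|H]; first by exists j.
  exfalso; move: c1; rewrite big1 => [/eqP|j _]; first by rewrite eq_sym oner_eq0.
  by have := H j; move/negbT; rewrite negbK => /eqP.
case: (boolP ((0 < j0)%N && (c j0.-1 != 0))) => [/andP[j00 cj1]|H].
  exists j0.-1 => j jk cj.
  have := adj _ _ jk j0k cj cj0; have := adj _ _ jk (leq_ltn_trans (leq_pred _) j0k) cj cj1.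
  lia.
exists j0 => j jk cj.
have := adj _ _ jk j0k cj cj0.
case: (eqVneq j j0.-1) => [E|]; last lia.
move: H; rewrite negb_and -E cj orbF -leqNgt leqn0 => /eqP j00.
lia.
Qed.

Definition supp (R : realType) m (x : 'rV[R]_m) : {set 'I_m} := [set i | x ord0 i != 0].

Lemma conv_face (R : realType) m (e : rel 'I_m) (c : nat -> R) (y : nat -> 'rV[R]_m) k :
  (forall j, (j < k)%N -> 0 <= c j) -> \sum_(j < k) c j = 1 ->
  (forall j, simp (y j)) ->
  (forall i j, (i < k)%N -> (j < k)%N -> c i != 0 -> c j != 0 ->
      (i <= j.+1)%N /\ (j <= i.+1)%N) ->
  (forall a, supp (y a) :|: supp (y a.+1) \in Delta2t e) ->
  realization R m (Delta2t e) (\sum_(j < k) c j *: y j).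
Proof.
move=> c0 c1 ys adj faces.
have [[s0 s1] sp] := conv_simp c0 c1 ys.
have [a Ha] := adj_pair c1 adj.
split; first exact: s0. split; first exact: s1.
apply: (face_down _ (faces a)).
apply/fintype.subsetP => i; rewrite inE => /sp [j [jk cj yj]].
have [E|E] := Ha j jk cj; subst j; rewrite !inE yj ?orbT //.
Qed.

Definition ev (R : realType) m (v : 'I_m) : 'rV[R]_m := \row_j (j == v)%:R.

Lemma ev_simp (R : realType) m (v : 'I_m) : simp (ev R v).
Proof.
split=> [i|]; first by rewrite mxE ler0n.
rewrite (bigD1 v) //= mxE eqxx big1 ?addr0 // => i iv.
by rewrite mxE (negbTE iv).
Qed.

Lemma ev_supp (R : realType) m (v : 'I_m) : supp (ev R v) = [set v]%SET.
Proof.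
apply/setP => i; rewrite !inE mxE.
by case: (eqVneq i v); rewrite ?oner_eq0 ?eqxx.
Qed.

Definition vert (R : realType) n (x : 'rV[R]_n.+1) : 'I_n.+1 :=
  odflt ord0 [pick j | n.+1%:R^-1 <= x ord0 j].

Lemma vert_ge (R : realType) n (x : 'rV[R]_n.+1) :
  simp x -> n.+1%:R^-1 <= x ord0 (vert x).
Proof.
move=> [x0 x1]; rewrite /vert; case: pickP => [j //|H].
exfalso.
have : \sum_(j < n.+1) x ord0 j < \sum_(j < n.+1) n.+1%:R^-1.
  apply: ltr_sum.
    by apply/hasP; exists ord0; first exact: mem_index_enum.
  by move=> j _; have := H j; move/negbT; rewrite -ltNge.
rewrite x1 sumr_const card_ord -[_ *+ _]mulr_natr mulVf ?ltxx //.
Qed.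
Lemma inIP (R : realType) (s : R) : unit_interval R s <-> 0 <= s <= 1.
Proof. by rewrite /unit_interval /= in_itv. Qed.

Lemma fst_cont (T U : topologicalType) : continuous (fun z : T * U => z.1).
Proof. by move=> [x y]; exact: cvg_fst. Qed.

Lemma snd_cont (T U : topologicalType) : continuous (fun z : T * U => z.2).
Proof. by move=> [x y]; exact: cvg_snd. Qed.

Lemma hat_lin_cont (R : realType) (a b : R) : continuous (fun s : R => hat (a * s - b)).
Proof.
move=> x.
have -> : (fun s : R => hat (a * s - b)) = (@hat R) \o (fun s => a * s - b) by [].
apply: continuous_comp; last exact: hat_continuous.
apply: cvgB; last exact: cvg_cst.
by apply: cvgM; [exact: cvg_cst | exact: cvg_id].
Qed.

Lemma hat_sum_at' (R : realType) (V : lmodType R) M (Q : nat -> V) j (u : R) :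
  (j <= M)%N -> u = j%:R -> \sum_(i < M.+1) hat (u - i%:R) *: Q i = Q j.
Proof. by move=> jM ->; apply: hat_sum_at. Qed.

Lemma sum_hat_cont (R : realType) (V : normedModType R) M (a : R) (w : nat -> V) :
  continuous (fun s : R => \sum_(i < M.+1) hat (a * s - i%:R) *: w i).
Proof.
move=> x; apply: (@cvg_sumk R V R _ _ M.+1 (fun i s => hat (a * s - i%:R) *: w i)
   (fun i => hat (a * x - i%:R) *: w i)) => i _.
apply: cvgZ; last exact: cvg_cst.
exact: hat_lin_cont.
Qed.
Lemma card3 (T : finType) (a b c : T) : (#|[set a; b; c]%SET| <= 3)%N.
Proof.
apply: (leq_trans (leq_card_setU _ _)); rewrite cards1 addn1 ltnS.
apply: (leq_trans (leq_card_setU _ _)); by rewrite !cards1.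
Qed.

Lemma loop_null (R : realType) n (e : rel 'I_n.+1)
  (hsmall : forall s : {set 'I_n.+1}, (#|s| <= 3)%N -> s \in Delta2t e)
  (f : R -> 'rV[R]_n.+1) :
  {within unit_interval R, continuous f} ->
  (forall s, unit_interval R s -> realization R n.+1 (Delta2t e) (f s)) -> f 0 = f 1 ->
     exists H : R * R -> 'rV[R]_n.+1,
       {within (unit_interval R `*` unit_interval R), continuous H} /\
       (forall p, (unit_interval R `*` unit_interval R) p ->
           realization R n.+1 (Delta2t e) (H p)) /\
       (forall s, unit_interval R s -> H (s, 0) = f s /\ H (s, 1) = f 0) /\
       (forall t, unit_interval R t -> H (0, t) = f 0 /\ H (1, t) = f 0).
Proof.
set I := unit_interval R.
set K := Delta2t e.
move=> fc fX f01.
set p := f 0.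
have I0 : I 0 by apply/inIP; rewrite lexx ler01.
have I1 : I 1 by apply/inIP; rewrite lexx ler01.
have Isimp : forall s, I s -> simp (f s).
  by move=> s Is; have [h1 [h2 _]] := fX s Is; split.
have Iface : forall s, I s -> supp (f s) \in K by move=> s Is; have [_ [_ h]] := fX s Is.
have psimp : simp p := Isimp 0 I0.
have pface : supp p \in K := Iface 0 I0.
have [mu mu0 Hmu] : exists2 mu, 0 < mu & forall j, p ord0 j != 0 -> mu <= p ord0 j.
  have pos : forall j, j \in [seq j <- enum 'I_n.+1 | p ord0 j != 0] -> 0 < p ord0 j.
    move=> j; rewrite mem_filter => /andP[pj _]; rewrite lt_neqAle eq_sym pj.
    by case: psimp => ->.
  have [mu mu0 Hmu] := seq_min_pos pos.
  exists mu => // j pj; apply: Hmu; by rewrite mem_filter pj mem_enum.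
set eps := Num.min (n.+1%:R^-1) mu.
have eps0 : 0 < eps by rewrite lt_min mu0 invr_gt0 ltr0Sn.
have [d d0 Hd] := unif_cont (a := 0) (b := 1) fc eps0.
have close : forall s s' j, I s -> I s' -> `|s - s'| < d -> eps <= f s' ord0 j ->
    0 < f s ord0 j.
  move=> s s' j Is Is' ss' fj.
  have := coord_le (f s - f s') j; rewrite !mxE => h.
  have h2 := Hd _ _ Is Is' ss'.
  have h3 : `|f s ord0 j - f s' ord0 j| < eps by apply: le_lt_trans h h2.
  move: h3; rewrite ltr_norml; lra.
set N := (Num.trunc d^-1).+1.
have N0 : (0 < N)%N by [].
have NR0 : 0 < N%:R :> R by rewrite ltr0n.
have Nd : N%:R^-1 < d.
  rewrite -[d]invrK ltf_pV2 ?posrE ?invr_gt0 //.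
  exact: truncnS_gt.
have Ii : forall i, (i <= N)%N -> I (i%:R / N%:R).
  move=> i iN; apply/inIP; rewrite divr_ge0 ?ler0n //=.
  by rewrite ler_pdivrMr // mul1r ler_nat.
have fi0 : f (0%:R / N%:R) = p by rewrite mul0r.
have fiN : f (N%:R / N%:R) = p by rewrite divff ?pnatr_eq0 // -f01.
pose v (i : nat) := vert (f (i%:R / N%:R)).
set v0 := v 0%N.
have v0p : 0 < p ord0 v0.
  rewrite /v0 /v fi0; apply: lt_le_trans (vert_ge psimp).
  by rewrite invr_gt0 ltr0Sn.
pose isend (i : nat) := (i == 0)%N || (N <= i)%N.
pose w (i : nat) := if isend i then p else ev R (v i).
pose w' (i : nat) := if isend i then p else ev R v0.
pose phi (i : nat) (s : R) := hat (N%:R * s - i%:R).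
pose g (s : R) := \sum_(i < N.+1) phi i s *: w i.
pose c (s : R) := \sum_(i < N.+1) phi i s *: w' i.
have wsimp : forall i, simp (w i) by move=> i; rewrite /w; case: ifP => _ //; exact: ev_simp.
have w'simp : forall i, simp (w' i) by move=> i; rewrite /w'; case: ifP => _ //; exact: ev_simp.
have phi0 : forall s i, 0 <= phi i s by move=> s i; exact: hat_ge0.
have phi1 : forall s, I s -> \sum_(i < N.+1) phi i s = 1.
  move=> s /inIP /andP[s0 s1]; apply: hat_sum; first by rewrite mulr_ge0 ?ler0n.
  by rewrite -{2}[N%:R]mulr1 ler_pM2l.
have phid : forall s i, I s -> phi i s != 0 -> `|s - i%:R / N%:R| < d.
  move=> s i Is /hat_neq0 h; apply: lt_trans Nd.
  have -> : s - i%:R / N%:R = (N%:R * s - i%:R) / N%:R.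
    by field; rewrite pnatr_eq0.
  rewrite normrM [`|N%:R^-1|]ger0_norm ?invr_ge0 ?ler0n // -[X in _ < X]mul1r ltr_pM2r ?invr_gt0 //.
have F1 : forall s i, I s -> (i <= N)%N -> phi i s != 0 -> supp (w i) \subset supp (f s).
  move=> s i Is iN ph.
  have Hc := close s _ _ Is (Ii i iN) (phid s i Is ph).
  rewrite /w; case: ifP => ie.
    have fp : f (i%:R / N%:R) = p.
      by move: ie; rewrite /isend => /orP[/eqP->|Ni]; [|have -> : i = N by lia].
    apply/fintype.subsetP => j; rewrite !inE => pj.
    rewrite gt_eqF //; apply: Hc; rewrite fp.
    by apply: le_trans (Hmu j pj); rewrite ge_min lexx orbT.
  rewrite ev_supp; apply/fintype.subsetP => j; rewrite !inE => /eqP->.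
  rewrite gt_eqF //; apply: Hc.
  apply: le_trans (vert_ge (Isimp _ (Ii i iN))).
  by rewrite ge_min lexx.
have phiN : forall s j, I s -> phi j s != 0 -> (j <= N)%N.
  move=> s j /inIP /andP[s0 s1] /hat_neq0; rewrite ltr_norml => /andP[h1 h2].
  have : j%:R < N%:R + 1 :> R.
    have : N%:R * s <= N%:R :> R by rewrite -{2}[N%:R]mulr1 ler_pM2l.
    lra.
  by rewrite natr1 ltr_nat.
have F2 : forall s, I s -> simp (g s) /\ supp (g s) \subset supp (f s).
  move=> s Is.
  have [sg sp] := @conv_simp R n.+1 N.+1 (fun i => phi i s) w (fun j _ => phi0 s j) (phi1 s Is) wsimp.
  split => //; apply/fintype.subsetP => j; rewrite inE => /sp [i [iN ph wi]].
  have := fintype.subsetP (F1 s i Is iN ph) j; rewrite !inE; apply; exact: wi.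
have F2' : forall s, I s -> simp (c s) /\ forall j, c s ord0 j != 0 ->
     exists i, [/\ (i < N.+1)%N, phi i s != 0 & w' i ord0 j != 0].
  move=> s Is; exact: (@conv_simp R n.+1 N.+1 (fun i => phi i s) w' (fun j _ => phi0 s j) (phi1 s Is) w'simp).
have F2g : forall s, I s -> forall j, g s ord0 j != 0 ->
     exists i, [/\ (i < N.+1)%N, phi i s != 0 & w i ord0 j != 0].
  move=> s Is; exact: (@conv_simp R n.+1 N.+1 (fun i => phi i s) w (fun j _ => phi0 s j) (phi1 s Is) wsimp).2.
have v0supp : v0 \in supp p by rewrite inE gt_eqF.
have w'p : forall i, supp (w' i) \subset supp p.
  move=> i; rewrite /w'; case: ifP => _ //; rewrite ev_supp.
  by apply/fintype.subsetP => j; rewrite inE => /eqP->.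
have F4 : forall s, I s -> supp (c s) \subset supp p.
  move=> s Is; apply/fintype.subsetP => j; rewrite inE => /((F2' s Is).2) [i [_ _ wi]].
  by apply: (fintype.subsetP (w'p i)); rewrite inE.
have F3 : forall s, I s -> supp (g s) :|: supp (c s) \in K.
  move=> s Is.
  have [a Ha] := adj_pair (phi1 s Is) (fun i j _ _ hi hj => hat_adj hi hj).
  case: (boolP [exists j : 'I_N.+1, isend j && (phi j s != 0)]).
    case/existsP => j0 /andP[ej0 pj0].
    have pf : supp p \subset supp (f s).
      by have := F1 s j0 Is (phiN _ _ Is pj0) pj0; rewrite /w ej0.
    apply: (face_down _ (Iface s Is)).
    apply/fintype.subsetP => j; rewrite finset.in_setU => /orP[].
      by apply: (fintype.subsetP (F2 s Is).2).
    by move=> jc; apply: (fintype.subsetP pf); apply: (fintype.subsetP (F4 s Is)).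
  move=> /negP nend.
  have mid : forall i, phi i s != 0 -> ~~ isend i.
    move=> i pi; apply/negP => ei; apply: nend; apply/existsP.
    have iN : (i < N.+1)%N by have := phiN _ _ Is pi.
    by exists (Ordinal iN); rewrite /= ei pi.
  apply: (face_down (t := [set v a; v a.+1; v0]%SET)); last first.
    apply: hsmall; exact: card3.
  apply/fintype.subsetP => j; case/finset.setUP; rewrite inE.
    move=> /(F2g s Is) [i [iN pi wi]].
    move: wi; rewrite /w (negbTE (mid i pi)) mxE.
    case: (eqVneq j (v i)) => [->|]; last by rewrite eqxx.
    by have [->|->] := Ha i iN pi; rewrite !inE eqxx ?orbT.
  move=> /((F2' s Is).2) [i [iN pi wi]].
  move: wi; rewrite /w' (negbTE (mid i pi)) mxE.
  case: (eqVneq j v0) => [->|]; last by rewrite eqxx.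
  by rewrite !inE eqxx ?orbT.
pose P (k : nat) (s : R) := if k == 0%N then f s else if k == 1%N then g s
   else if k == 2%N then c s else p.
pose H (z : R * R) := \sum_(k < 4) hat (3 * z.2 - k%:R) *: P k z.1.
have gcont : continuous g by exact: sum_hat_cont.
have ccont : continuous c by exact: sum_hat_cont.
have g0 : g 0 = p.
  rewrite /g /phi (@hat_sum_at' R _ N w 0) //; by rewrite mulr0.
have c0 : c 0 = p.
  rewrite /c /phi (@hat_sum_at' R _ N w' 0) //; by rewrite mulr0.
have g1 : g 1 = p.
  rewrite /g /phi (@hat_sum_at' R _ N w N) ?mulr1 //.
  by rewrite /w /isend leqnn orbT.
have c1 : c 1 = p.
  rewrite /c /phi (@hat_sum_at' R _ N w' N) ?mulr1 //.
  by rewrite /w' /isend leqnn orbT.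
have P0 : forall k, P k 0 = p by case => [|[|[|k]]].
have P1 : forall k, P k 1 = p by case => [|[|[|k]]] //=; rewrite -f01.
exists H; split; [|split; [|split]].
- apply/subspace_continuousP => z [Iz1 Iz2].
  apply: (@cvg_sumk R _ _ _ _ 4 (fun k z => hat (3 * z.2 - k%:R) *: P k z.1)
     (fun k => hat (3 * z.2 - k%:R) *: P k z.1)) => k _.
  apply: cvgZ.
    apply: within_cont.
    have -> : (fun z : R * R => hat (3 * z.2 - k%:R)) =
       (fun s => hat (3 * s - k%:R)) \o (fun z : R * R => z.2) by [].
    move=> y; apply: continuous_comp; [exact: snd_cont | exact: hat_lin_cont].
  case: k => [|[|[|k]]]; rewrite /P /=.
  + exact: (cvg_comp _ _ (@within_fst _ _ I I z) ((subspace_continuousP I f).1 fc z.1 Iz1)).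
  + apply: within_cont => y.
    apply: continuous_comp; [exact: fst_cont | exact: gcont].
  + apply: within_cont => y.
    apply: continuous_comp; [exact: fst_cont | exact: ccont].
  + exact: cvg_cst.
- move=> [s t] [Is It] /=.
  move/inIP: (It) => /andP[t0 t1].
  apply: (@conv_face R n.+1 e (fun k => hat (3 * t - k%:R)) (fun k => P k s) 4).
  + by move=> j _; exact: hat_ge0.
  + apply: hat_sum; [by rewrite mulr_ge0 | by rewrite -[leRHS]mulr1 ler_pM2l].
  + case => [|[|[|k]]]; rewrite /P /=; [exact: Isimp | exact: (F2 s Is).1 | exact: (F2' s Is).1 | exact: psimp].
  + by move=> i j _ _; exact: hat_adj.
  + case => [|[|[|a]]]; rewrite /P /=.
    * have -> : supp (f s) :|: supp (g s) = supp (f s) by apply/finset.setUidPl; exact: (F2 s Is).2.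
      exact: Iface.
    * exact: F3.
    * by have -> : supp (c s) :|: supp p = supp p by apply/finset.setUidPr; exact: F4.
    * by rewrite finset.setUid.
- move=> s Is; rewrite /H /=; split.
  + by rewrite (@hat_sum_at' R _ 3 (fun k => P k s) 0) // mulr0.
  + by rewrite (@hat_sum_at' R _ 3 (fun k => P k s) 3) // mulr1.
- move=> t It; move/inIP: (It) => /andP[t0 t1]; rewrite /H /=; split.
  + under eq_bigr do rewrite P0.
    by rewrite hat_sum_scale // ?mulr_ge0 // -[leRHS]mulr1 ler_pM2l.
  + under eq_bigr do rewrite P1.
    by rewrite hat_sum_scale // ?mulr_ge0 // -[leRHS]mulr1 ler_pM2l.
Qed.

Lemma vert_supp (R : realType) n (x : 'rV[R]_n.+1) : simp x -> vert x \in supp x.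
Proof.
move=> sx; rewrite inE gt_eqF //; apply: lt_le_trans (vert_ge sx).
by rewrite invr_gt0 ltr0Sn.
Qed.


Lemma main_helper (R : realType) (r n : nat) :
  (3 <= r)%N -> (2 * r + 3 <= n)%N ->
  @simply_connected R ('rV[R]_n : topologicalType)
    (realization R n (Delta2t (@Cnr n r))).
Proof.
move=> r3; case: n => [|n] rn; first lia.
have hsmall := fun s => @small_face r n s r3 rn.
set K := Delta2t (@Cnr n.+1 r).
have simpX : forall x, realization R n.+1 K x -> simp x.
  by move=> x [h1 [h2 _]]; split.
have faceX : forall x, realization R n.+1 K x -> supp x \in K.
  by move=> x [_ [_ h]].
split; [|split].
- exists (ev R (ord0 : 'I_n.+1)); split; first by case: (ev_simp R (ord0 : 'I_n.+1)).
  split; first by case: (ev_simp R (ord0 : 'I_n.+1)).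
  have -> : finset (fun i => ev R (ord0 : 'I_n.+1) ord0 i != 0) = supp (ev R ord0) by [].
  by rewrite ev_supp; apply: hsmall; rewrite cards1.
- move=> x y Xx Xy.
  pose Q (k : nat) := if k == 0%N then x else if k == 1%N then ev R (vert x)
     else if k == 2%N then ev R (vert y) else y.
  exists (fun t => \sum_(k < 4) hat (3 * t - k%:R) *: Q k).
  split; [|split; [|split]].
  + by apply: continuous_subspaceT; exact: sum_hat_cont.
  + move=> t /inIP /andP[t0 t1].
    apply: (@conv_face R n.+1 (@Cnr n.+1 r) (fun k => hat (3 * t - k%:R)) Q 4).
    * by move=> j _; exact: hat_ge0.
    * apply: hat_sum; [by rewrite mulr_ge0 | by rewrite -[leRHS]mulr1 ler_pM2l].
    * case => [|[|[|k]]]; rewrite /Q /=; [exact: simpX | exact: ev_simp | exact: ev_simp | exact: simpX].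
    * by move=> i j _ _; exact: hat_adj.
    * case => [|[|[|a]]]; rewrite /Q /=.
      -- rewrite ev_supp (_ : _ :|: _ = supp x); first exact: faceX.
         apply/finset.setUidPl; apply/fintype.subsetP => j; rewrite inE => /eqP->.
         exact: vert_supp (simpX _ Xx).
      -- by rewrite !ev_supp; apply: hsmall; apply: (leq_trans (leq_card_setU _ _)); rewrite !cards1.
      -- rewrite ev_supp (_ : _ :|: _ = supp y); first exact: faceX.
         apply/finset.setUidPr; apply/fintype.subsetP => j; rewrite inE => /eqP->.
         exact: vert_supp (simpX _ Xy).
      -- by rewrite finset.setUid; exact: faceX.
  + by rewrite (@hat_sum_at' R _ 3 Q 0) // mulr0.
  + by rewrite (@hat_sum_at' R _ 3 Q 3) // mulr1.
- move=> f fc fX f01; exact: loop_null.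
Qed.

End Helpers.
Import Helpers.

Theorem mainTheorem20 (R : realType) (r n : nat) :
  (3 <= r)%N -> (2 * r + 3 <= n)%N ->
  @simply_connected R ('rV[R]_n : topologicalType)
    (realization R n (Delta2t (@Cnr n r))).
Proof. exact: main_helper. Qed.
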